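(* Let $G$ and $H$ be finitely generated residually finite groups, let $S$ be a finite symmetric generating set of $G\times H$, and let $(X_n)_{n\ge0}$ be the lazy random walk on $\mathrm{Cay}(G\times H,S)$. Write $X_n=(Y_n,Z_n)$ with $Y_n\in G$, $Z_n\in H$. Then for all $k\ge0$ and all $n$, $$\mathbb{P}[D_{G\times H}(X_n)>k]\le\mathbb{P}[D_G(Y_n)>k]+\mathbb{P}[D_H(Z_n)>k].$$
   Context: For a group $\Gamma$ and $g\ne e$, $D_\Gamma(g)=\min\{[\Gamma:N]: N\lhd\Gamma\text{ of finite index},\ g\notin N\}$, and $D_\Gamma(e)=0$. The lazy random walk on $\mathrm{Cay}(\Gamma,S)$ is the Markov chain with $X_0=e$ and transition matrix $\frac12I+\frac12P$, $P(x,y)=\frac1{|S|}\#\{s\in S:y=xs\}$. *)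

(* Defs.v *)
From mathcomp Require Import all_boot all_algebra.
From Stdlib Require ClassicalEpsilon List.
Set Implicit Arguments. Unset Strict Implicit. Unset Printing Implicit Defensive.
Import GRing.Theory Num.Theory.

Record group := Group {
  gT :> Type;
  gmul : gT -> gT -> gT;
  gone : gT;
  ginv : gT -> gT;
  gmulA : forall x y z, gmul x (gmul y z) = gmul (gmul x y) z;
  gmul1 : forall x, gmul x gone = x;
  g1mul : forall x, gmul gone x = x;
  gmulV : forall x, gmul x (ginv x) = gone;
  gVmul : forall x, gmul (ginv x) x = gone
}.

Arguments gmul {g}. Arguments gone {g}. Arguments ginv {g}.

Definition prod_group (G H : group) : group.
Proof.
refine (@Group (gT G * gT H)%type
  (fun x y => (gmul x.1 y.1, gmul x.2 y.2)) (gone, gone)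
  (fun x => (ginv x.1, ginv x.2)) _ _ _ _ _).
- by move=> [? ?] [? ?] [? ?] /=; rewrite !gmulA.
- by move=> [? ?] /=; rewrite !gmul1.
- by move=> [? ?] /=; rewrite !g1mul.
- by move=> [? ?] /=; rewrite !gmulV.
- by move=> [? ?] /=; rewrite !gVmul.
Defined.

Definition generated (G : group) (A : G -> Prop) (x : G) : Prop :=
  forall P : G -> Prop, P gone -> (forall a b, P a -> P b -> P (gmul a b)) ->
    (forall a, P a -> P (ginv a)) -> (forall a, A a -> P a) -> P x.

Definition generates (G : group) (S : seq G) : Prop :=
  forall x : G, generated (fun a => List.In a S) x.

Definition finitely_generated (G : group) : Prop :=
  exists S : seq G, generates S.

Definition symmetric_set (G : group) (S : seq G) : Prop :=
  forall s, List.In s S -> List.In (ginv s) S.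

Definition normal_subgroup (G : group) (N : G -> Prop) : Prop :=
  [/\ N gone, (forall a b, N a -> N b -> N (gmul a b)), (forall a, N a -> N (ginv a))
    & (forall g a, N a -> N (gmul (ginv g) (gmul a g)))].

Definition has_index (G : group) (N : G -> Prop) (k : nat) : Prop :=
  exists r : 'I_k -> G, forall x : G, exists! i : 'I_k, N (gmul (ginv (r i)) x).

Definition residually_finite (G : group) : Prop :=
  forall g : G, g <> gone ->
    exists N k, [/\ normal_subgroup N, has_index N k & ~ N g].

Definition is_D (G : group) (g : G) (d : nat) : Prop :=
  (g = gone /\ d = 0%N) \/
  (g <> gone /\
   (exists N, [/\ normal_subgroup N, has_index N d & ~ N g]) /\
   (forall N k, normal_subgroup N -> has_index N k -> ~ N g -> (d <= k)%N)).

Definition D (G : group) (g : G) : nat :=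
  ClassicalEpsilon.epsilon (inhabits 0%N) (is_D g).

(* Lazy random walk: at each step, stay (prob 1/2) or multiply on the right
   by the i-th element of S (prob 1/(2|S|)). A trajectory of length n is
   encoded by its sequence of choices. *)
Definition step (G : group) (S : seq G) (x : G) (c : option 'I_(size S)) : G :=
  match c with None => x | Some i => gmul x (nth gone S i) end.

Definition walk (G : group) (S : seq G) (n : nat)
  (w : {ffun 'I_n -> option 'I_(size S)}) : G :=
  foldl (@step G S) gone [seq w j | j <- enum 'I_n].

Definition step_weight (G : group) (S : seq G) (c : option 'I_(size S)) : rat :=
  match c with None => 1 / 2 | Some _ => 1 / (2 * (size S)%:R) end.

Definition walk_prob (G : group) (S : seq G) (n : nat) (E : G -> bool) : rat :=
  \sum_(w : {ffun 'I_n -> option 'I_(size S)})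
     (\prod_(j < n) @step_weight G S (w j)) * (E (@walk G S n w))%:R.

(* Main.v *)
Require Import Defs.
From mathcomp Require Import all_boot all_algebra.
From Stdlib Require Import Classical.
Import GRing.Theory Num.Theory.

Lemma min_ex (P : nat -> Prop) : (exists k, P k) -> exists d, P d /\ forall k, P k -> (d <= k)%N.
Proof.
move=> [k Pk].
case: (classic (exists d, P d /\ forall k, P k -> (d <= k)%N)) => // Hn; exfalso.
have H: forall n m, (m <= n)%N -> ~ P m.
  elim=> [|n IH] m Hm Pm.
  - apply Hn; exists m; split=>// j _; rewrite leqn0 in Hm; by rewrite (eqP Hm).
  - apply Hn; exists m; split=>// j Pj; rewrite leqNgt; apply/negP=> Hjm.
    apply: (IH j _ Pj); by rewrite -ltnS (leq_trans Hjm Hm).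
exact: (H k k (leqnn k) Pk).
Qed.

Lemma D_spec (G : group) (g : G) : (exists d, is_D g d) -> is_D g (D g).
Proof.
move=> [d Hd]; rewrite /D.
exact: (ClassicalEpsilon.epsilon_spec (inhabits 0%N) (is_D g) (ex_intro _ d Hd)).
Qed.
Arguments D_spec {G g}.

Lemma is_D_of (G : group) (g : G) : g <> gone ->
  (exists N k, [/\ normal_subgroup N, has_index N k & ~ N g]) -> exists d, is_D g d.
Proof.
move=> ng [N [k H]].
have [d [[N' HN'] Hmin]] := @min_ex (fun k => exists N,
   [/\ normal_subgroup N, has_index N k & ~ N g]) (ex_intro _ k (ex_intro _ N H)).
exists d; right; split=>//; split; first by exists N'.
move=> N0 k0 a b c; apply Hmin; exists N0; by split.
Qed.
Arguments is_D_of {G g}.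

Lemma D_le (G : group) (g : G) N k : g <> gone -> normal_subgroup N ->
  has_index N k -> ~ N g -> (D g <= k)%N.
Proof.
move=> ng a b c.
have := D_spec (is_D_of ng (ex_intro _ N (ex_intro _ k (And3 a b c)))).
case => [[e _]|[_ [_ Hm]]]; [exfalso; exact: (ng e) | exact: (Hm N k a b c)].
Qed.
Arguments D_le {G g N k}.

Lemma D_one (G : group) : D (gone : G) = 0%N.
Proof.
have := @D_spec G gone (ex_intro _ 0%N (or_introl (conj erefl erefl))).
by case => [[_ ->]|[ng _]]; [|exfalso; apply: ng].
Qed.
Arguments D_one {G}.

Lemma D_wit (G : group) (g : G) : residually_finite G -> g <> gone ->
  exists N, [/\ normal_subgroup N, has_index N (D g) & ~ N g].
Proof.
move=> rf ng; have := D_spec (is_D_of ng (rf g ng)).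
case => [[e _]|[_ [H _]]]; [exfalso; exact: (ng e) | exact: H].
Qed.
Arguments D_wit {G g}.

Lemma pointwise (G H : group) (x : prod_group G H) k :
  residually_finite G -> residually_finite H ->
  (k < D x)%N -> (k < D x.1)%N || (k < D x.2)%N.
Proof.
move=> rG rH; case: x => a b /= Hk.
case: (classic (a = gone)) => [ea|na].
  case: (classic (b = gone)) => [eb|nb].
    move: Hk; have -> : ((a, b) : prod_group G H) = gone by rewrite ea eb.
    by rewrite D_one.
  have [N [[N1 N2 N3 N4] [r Hr] nN]] := D_wit rH nb.
  have : (D ((a, b) : prod_group G H) <= D b)%N.
    apply: (D_le (N := fun p : prod_group G H => N p.2)).
    - by move=> E; apply: nb; have := f_equal snd E.
    - split => //=.
      + by move=> p q; apply: N2.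
      + by move=> p; apply: N3.
      + by move=> p q; apply: N4.
    - exists (fun i => ((gone, r i) : prod_group G H)) => -[y z].
      have [i [Hi Hu]] := Hr z; exists i; split; first exact: Hi.
      by move=> j Hj; apply: Hu; exact: Hj.
    - exact: nN.
  by move=> Hle; apply/orP; right; apply: leq_trans Hk Hle.
have [N [[N1 N2 N3 N4] [r Hr] nN]] := D_wit rG na.
have : (D ((a, b) : prod_group G H) <= D a)%N.
  apply: (D_le (N := fun p : prod_group G H => N p.1)).
  - by move=> E; apply: na; have := f_equal fst E.
  - split => //=.
    + by move=> p q; apply: N2.
    + by move=> p; apply: N3.
    + by move=> p q; apply: N4.
  - exists (fun i => ((r i, gone) : prod_group G H)) => -[y z].
    have [i [Hi Hu]] := Hr y; exists i; split; first exact: Hi.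
    by move=> j Hj; apply: Hu; exact: Hj.
  - exact: nN.
by move=> Hle; apply/orP; left; apply: leq_trans Hk Hle.
Qed.
Arguments pointwise {G H x k}.

Theorem proposition4p6 (G H : group) (S : seq (prod_group G H)) (k n : nat) :
  finitely_generated G -> finitely_generated H ->
  residually_finite G -> residually_finite H ->
  List.NoDup S -> symmetric_set S -> generates S ->
  (walk_prob S n (fun x => (k < D x)%N)
   <= walk_prob S n (fun x => (k < D (G:=G) x.1)%N)
      + walk_prob S n (fun x => (k < D (G:=H) x.2)%N))%R.
Proof.
move=> _ _ rG rH _ _ _.
rewrite /walk_prob -big_split /=; apply: ler_sum => w _.
have w0 : (0 <= \prod_(j < n) @step_weight _ S (w j) :> rat)%R.
  apply: prodr_ge0 => j _; case: (w j) => [i|] /=; by rewrite divr_ge0 // ?mulr_ge0 // ler0n.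
rewrite -mulrDr; apply: ler_wpM2l => //.
move: (@walk (prod_group G H) S n w) => x.
case: (ltnP k (D x)) => Hk /=; last by rewrite addr_ge0 // ler0n.
have := pointwise rG rH Hk; case/orP => -> /=.
  by rewrite lerDl ler0n.
by rewrite lerDr ler0n.
Qed.
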